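(* Let $M$ be a normalizing unit-cancellative monoid. (1) $M$ is acyclic. (2) If $M$ is finitely generated, then $M$ is atomic. (3) If $M$ is finitely generated and reduced, then $\mathcal{A}(M)$ is the unique irredundant generating set for $M$, and it is finite.
   Context: $M^\times$ is the group of units of a monoid $M$; $M$ is reduced if $M^\times=\{1\}$. $M$ is normalizing if $aM=Ma$ for all $a\in M$. $M$ is unit-cancellative if $a=ab$ or $a=ba$ implies $b\in M^\times$. $M$ is acyclic if $a=bac$ implies $b,c\in M^\times$. An atom is a non-unit $a$ such that $a=bc$ implies $b\in M^\times$ or $c\in M^\times$; $\mathcal{A}(M)$ is the set of atoms; $M$ is atomic if every non-unit is a product of atoms. A generating set of $M$ is irredundant if no proper subset of it generates $M$ as a monoid. *)

(* Defs.v *)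
From Stdlib Require Import List.
Import ListNotations.
Set Implicit Arguments.

Record monoid := Monoid {
  carrier :> Type;
  mul : carrier -> carrier -> carrier;
  one : carrier;
  mulA : forall a b c, mul a (mul b c) = mul (mul a b) c;
  mul1m : forall a, mul one a = a;
  mulm1 : forall a, mul a one = a
}.

Section Defs.
Variable M : monoid.
Local Notation "a * b" := (mul M a b).
Local Notation "1" := (one M).

Definition is_unit (u : M) : Prop := exists v : M, u * v = 1 /\ v * u = 1.

Definition reduced : Prop := forall u : M, is_unit u -> u = 1.

(* aM = Ma for all a *)
Definition normalizing : Prop :=
  forall a : M, (forall b : M, exists c : M, a * b = c * a) /\
                (forall b : M, exists c : M, b * a = a * c).

Definition unit_cancellative : Prop :=
  forall a b : M, (a = a * b \/ a = b * a) -> is_unit b.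

Definition acyclic : Prop :=
  forall a b c : M, a = b * a * c -> is_unit b /\ is_unit c.

Definition atom (a : M) : Prop :=
  ~ is_unit a /\ forall b c : M, a = b * c -> is_unit b \/ is_unit c.

Definition prod (l : list M) : M := fold_right (mul M) 1 l.

Definition atomic : Prop :=
  forall a : M, ~ is_unit a -> exists l : list M, Forall atom l /\ a = prod l.

Definition generates (S : M -> Prop) : Prop :=
  forall a : M, exists l : list M, Forall S l /\ a = prod l.

Definition finitely_generated : Prop :=
  exists l : list M, generates (fun x => In x l).

Definition proper_subset (S' S : M -> Prop) : Prop :=
  (forall x, S' x -> S x) /\ exists x, S x /\ ~ S' x.

Definition irredundant_generating_set (S : M -> Prop) : Prop :=
  generates S /\ forall S' : M -> Prop, proper_subset S' S -> ~ generates S'.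

Definition finite_set (S : M -> Prop) : Prop :=
  exists l : list M, forall x, S x <-> In x l.

End Defs.

(* Main.v *)
Require Import Defs.
From Stdlib Require Import List Classical Lia.
Import ListNotations.

Local Arguments prod {M} l.
Local Arguments atom {M} a.
Local Arguments is_unit {M} u.
Local Arguments generates {M} S.

Section S.
Local Notation "a ** b" := (mul _ a b) (at level 40, left associativity).

Lemma prod_app {M : monoid} (l1 l2 : list M) :
  prod (l1 ++ l2) = prod l1 ** prod l2.
Proof.
  induction l1 as [|x l1 IH]; simpl.
  - now rewrite mul1m.
  - now rewrite IH, mulA.
Qed.

Lemma unit_rinv {M : monoid} : unit_cancellative M ->
  forall x y : M, x ** y = one M -> is_unit x /\ is_unit y.
Proof.
  intros UC x y Hxy.
  assert (Hx : x = x ** (y ** x)) by now rewrite mulA, Hxy, mul1m.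
  destruct (UC x (y ** x) (or_introl Hx)) as [v [Hv1 Hv2]].
  assert (e1 : v ** y = y).
  { transitivity ((v ** y) ** (x ** y)). now rewrite Hxy, mulm1.
    rewrite mulA, <- (mulA _ v y x), Hv2, mul1m. reflexivity. }
  assert (e2 : y ** x = one M).
  { rewrite <- e1 at 1. rewrite <- mulA. exact Hv2. }
  split; [exists y | exists x]; auto.
Qed.

Lemma unit_mul {M : monoid} (a b : M) : is_unit a -> is_unit b -> is_unit (a ** b).
Proof.
  intros [a' [Ha1 Ha2]] [b' [Hb1 Hb2]]. exists (b' ** a'). split.
  - rewrite <- mulA, (mulA _ b b' a'), Hb1, mul1m. exact Ha1.
  - rewrite <- mulA, (mulA _ a' a b), Ha2, mul1m. exact Hb2.
Qed.

Lemma unit_one {M : monoid} : is_unit (one M).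
Proof. exists (one M). now rewrite mul1m. Qed.

Lemma acyc {M : monoid} : normalizing M -> unit_cancellative M -> acyclic M.
Proof.
  intros N UC a b c H.
  destruct ((proj2 (N a)) b) as [b' Hb'].
  destruct ((proj1 (N a)) c) as [c' Hc'].
  split.
  - assert (E : a = (b ** c') ** a).
    { rewrite <- mulA, <- Hc', mulA. exact H. }
    destruct (UC a (b ** c') (or_intror E)) as [w [Hw1 _]].
    rewrite <- mulA in Hw1. exact (proj1 (unit_rinv UC _ _ Hw1)).
  - assert (E : a = a ** (b' ** c)).
    { rewrite mulA, <- Hb'. exact H. }
    destruct (UC a (b' ** c) (or_introl E)) as [w [_ Hw2]].
    rewrite mulA in Hw2. exact (proj2 (unit_rinv UC _ _ Hw2)).
Qed.

Lemma gen_replace {M : monoid} (S S' : M -> Prop) (g : M) :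
  generates S -> (forall x, S x -> x <> g -> S' x) ->
  (exists l, Forall S' l /\ g = prod l) -> generates S'.
Proof.
  intros HS Hsub [lg [Hlg Eg]] a.
  destruct (HS a) as [l [Hl ->]].
  induction l as [|x l IH].
  - exists []. split; auto.
  - pose proof (Forall_inv Hl) as Hx; pose proof (Forall_inv_tail Hl) as H2. destruct (IH H2) as [l' [Hl' E]].
    destruct (classic (x = g)) as [Exg|Hne]; [subst x|].
    + exists (lg ++ l'). split. apply Forall_app; auto.
      simpl. rewrite prod_app, <- E, <- Eg. reflexivity.
    + exists (x :: l'). split. constructor; auto. simpl. now rewrite E.
Qed.

Lemma gen_mono {M : monoid} (S S' : M -> Prop) :
  generates S -> (forall x, S x -> S' x) -> generates S'.
Proof.
  intros HS Hs a. destruct (HS a) as [l [Hl E]]. exists l. split; auto.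
  eapply Forall_impl; eauto.
Qed.

Lemma reduce_aux {M : monoid} : unit_cancellative M -> acyclic M ->
  forall n (G : list M), length G <= n -> generates (fun x => In x G) ->
  exists G' : list M, generates (fun x => In x G') /\
     Forall (fun x => atom x \/ is_unit x) G'.
Proof.
  intros UC AC n. induction n as [|n IH]; intros G Hlen Hgen;
  (destruct (classic (exists g, In g G /\ ~ atom g /\ ~ is_unit g)) as [Hex|Hno];
   [|exists G; split; auto; apply Forall_forall; intros x Hx;
     destruct (classic (atom x)); auto; destruct (classic (is_unit x)); auto;
     exfalso; apply Hno; eauto]).
  - destruct G; simpl in Hlen; [|lia]. destruct Hex as [g [[] _]].
  - destruct Hex as [g [Hg [Hna Hnu]]].
    assert (Hbc : exists b c, g = b ** c /\ ~ is_unit b /\ ~ is_unit c).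
    { apply NNPP; intro Hn. apply Hna. split; auto. intros b c e.
      destruct (classic (is_unit b)); auto. destruct (classic (is_unit c)); auto.
      exfalso; apply Hn; eauto. }
    destruct Hbc as [b [c [Eg [Hb Hc]]]].
    destruct (in_split g G Hg) as [l1 [l2 EG]].
    apply (IH (l1 ++ l2)).
    { rewrite EG in Hlen. rewrite length_app in *. simpl in Hlen. lia. }
    apply (@gen_replace M _ _ g Hgen).
    { intros x Hx Hne. rewrite EG in Hx. apply in_app_iff in Hx. apply in_app_iff.
      simpl in Hx. destruct Hx as [H|[H|H]]; auto. congruence. }
    destruct (Hgen b) as [lb [Hlb Eb]].
    destruct (Hgen c) as [lc [Hlc Ec]].
    assert (Nb : forall x, In x lb -> x <> g).
    { intros x Hx ->. destruct (in_split g lb Hx) as [p1 [p2 El]].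
      rewrite El, prod_app in Eb. simpl in Eb.
      assert (E : g = (prod p1 ** g) ** (prod p2 ** c)).
      { rewrite Eg at 1. rewrite Eb. rewrite !mulA. reflexivity. }
      destruct (AC _ _ _ E) as [_ [w [_ Hw]]].
      rewrite mulA in Hw. exact (Hc (proj2 (unit_rinv UC _ _ Hw))). }
    assert (Nc : forall x, In x lc -> x <> g).
    { intros x Hx ->. destruct (in_split g lc Hx) as [p1 [p2 El]].
      rewrite El, prod_app in Ec. simpl in Ec.
      assert (E : g = ((b ** prod p1) ** g) ** prod p2).
      { rewrite Eg at 1. rewrite Ec. rewrite !mulA. reflexivity. }
      destruct (AC _ _ _ E) as [[w [Hw _]] _].
      rewrite <- mulA in Hw. exact (Hb (proj1 (unit_rinv UC _ _ Hw))). }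
    exists (lb ++ lc). split.
    + apply Forall_forall. intros x Hx. apply in_app_iff in Hx.
      assert (HG : In x G /\ x <> g).
      { destruct Hx as [Hx|Hx].
        - split; [exact (proj1 (Forall_forall _ _) Hlb x Hx) | exact (Nb x Hx)].
        - split; [exact (proj1 (Forall_forall _ _) Hlc x Hx) | exact (Nc x Hx)]. }
      destruct HG as [HG Hne]. rewrite EG in HG. apply in_app_iff in HG.
      apply in_app_iff. simpl in HG. destruct HG as [H|[H|H]]; auto. congruence.
    + rewrite prod_app, <- Eb, <- Ec. exact Eg.
Qed.

Lemma atom_ul {M : monoid} (u x : M) : atom x -> is_unit u -> atom (u ** x).
Proof.
  intros [Hxn Hx] [u' [Hu1 Hu2]]. split.
  - intro H. apply Hxn.
    assert (E : x = u' ** (u ** x)) by now rewrite mulA, Hu2, mul1m.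
    rewrite E. apply unit_mul; auto. exists u; auto.
  - intros b c e.
    assert (E : x = (u' ** b) ** c) by now rewrite <- mulA, <- e, mulA, Hu2, mul1m.
    destruct (Hx _ _ E) as [H|H]; auto. left.
    assert (E2 : b = u ** (u' ** b)) by now rewrite mulA, Hu1, mul1m.
    rewrite E2. apply unit_mul; auto. exists u'; auto.
Qed.

Lemma atom_ur {M : monoid} (u x : M) : atom x -> is_unit u -> atom (x ** u).
Proof.
  intros [Hxn Hx] [u' [Hu1 Hu2]]. split.
  - intro H. apply Hxn.
    assert (E : x = (x ** u) ** u') by now rewrite <- mulA, Hu1, mulm1.
    rewrite E. apply unit_mul; auto. exists u; auto.
  - intros b c e.
    assert (E : x = b ** (c ** u')) by now rewrite mulA, <- e, <- mulA, Hu1, mulm1.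
    destruct (Hx _ _ E) as [H|H]; auto. right.
    assert (E2 : c = (c ** u') ** u) by now rewrite <- mulA, Hu2, mulm1.
    rewrite E2. apply unit_mul; auto. exists u'; auto.
Qed.

Lemma merge {M : monoid} (l : list M) : Forall (fun x => atom x \/ is_unit x) l ->
  is_unit (prod l) \/ exists l', Forall atom l' /\ prod l = prod l'.
Proof.
  induction l as [|x l IH]; intro H.
  - left. apply unit_one.
  - inversion H; subst. simpl.
    assert (Hcase : is_unit (prod l) \/
      exists y l'', Forall atom (y :: l'') /\ prod l = prod (y :: l'')).
    { destruct (IH H3) as [U|[l' [Hl' E]]]; auto. destruct l' as [|y l''].
      - left. rewrite E. apply unit_one.
      - right. eauto. }
    destruct Hcase as [U|[y [l'' [Hy E]]]]; destruct H2 as [Ha|Hu].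
    + right. exists [x ** prod l]. split. constructor; auto. apply atom_ur; auto.
      simpl. now rewrite mulm1.
    + left. apply unit_mul; auto.
    + right. exists (x :: y :: l''). split; [constructor; auto|]. simpl. now rewrite E.
    + inversion Hy; subst. right. exists ((x ** y) :: l''). split.
      constructor; auto. apply atom_ul; auto.
      simpl. rewrite E. simpl. now rewrite mulA.
Qed.

Lemma atomic_fg {M : monoid} : unit_cancellative M -> acyclic M ->
  finitely_generated M -> atomic M.
Proof.
  intros UC AC [G HG] a Ha.
  destruct (reduce_aux UC AC (length G) G (le_n _) HG) as [G' [HG' HF]].
  destruct (HG' a) as [l [Hl E]].
  assert (Hl2 : Forall (fun x => atom x \/ is_unit x) l).
  { eapply Forall_impl; [|exact Hl]. intros x Hx.
    exact (proj1 (Forall_forall _ _) HF x Hx). }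
  destruct (merge l Hl2) as [U|[l' [Hl' E']]].
  - exfalso. apply Ha. now rewrite E.
  - exists l'. split; auto. now rewrite E.
Qed.

Lemma in_of_atom {M : monoid} : reduced M -> forall (x : M) l,
  atom x -> x = prod l -> In x l.
Proof.
  intros R x l Hx. induction l as [|y l IH]; simpl; intro E.
  - exfalso. apply (proj1 Hx). rewrite E. apply unit_one.
  - destruct ((proj2 Hx) _ _ E) as [U|U]; apply R in U.
    + right. apply IH. rewrite E, U. apply mul1m.
    + left. rewrite E, U. now rewrite mulm1.
Qed.

Lemma filter_atoms {M : monoid} (l : list M) :
  exists l', forall x, (In x l /\ atom x) <-> In x l'.
Proof.
  induction l as [|y l [l' IH]].
  - exists []. simpl. tauto.
  - destruct (classic (atom y)) as [Hy|Hy].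
    + exists (y :: l'). intro x. simpl. rewrite <- IH. split.
      * intros [[->|H] Ha]; auto.
      * intros [<-|H]; tauto.
    + exists l'. intro x. simpl. rewrite <- IH. split.
      * intros [[->|H] Ha]; tauto.
      * tauto.
Qed.

End S.

Theorem proposition5p6 (M : monoid) :
  normalizing M -> unit_cancellative M ->
  acyclic M /\
  (finitely_generated M -> atomic M) /\
  (finitely_generated M -> reduced M ->
     @irredundant_generating_set M (@atom M) /\
     (forall S : M -> Prop, @irredundant_generating_set M S ->
        forall x : M, S x <-> @atom M x) /\
     @finite_set M (@atom M)).
Proof.
  intros N UC. pose proof (acyc N UC) as AC.
  split; [exact AC|]. split; [exact (atomic_fg UC AC)|].
  intros FG R.
  assert (Gen : generates (@atom M)).
  { intro a. destruct (classic (is_unit a)) as [U|U].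
    - exists []. split; auto; simpl; now apply R.
    - exact (atomic_fg UC AC FG a U). }
  split; [|split].
  - split; auto. intros S' [Hsub [x [Hx Hnx]]] Hg.
    destruct (Hg x) as [l [Hl E]]. apply Hnx.
    exact (proj1 (Forall_forall _ _) Hl x (in_of_atom R _ _ Hx E)).
  - intros S [HgS Hirr].
    assert (A2S : forall x, atom x -> S x).
    { intros x Hx. destruct (HgS x) as [l [Hl E]].
      exact (proj1 (Forall_forall _ _) Hl x (in_of_atom R _ _ Hx E)). }
    intro x. split; auto. intro Sx.
    destruct (classic (atom x)) as [Ha|Ha]; auto. exfalso.
    apply (Hirr (fun y => S y /\ y <> x)).
    + split. intros y [Hy _]; auto. exists x. split; auto. tauto.
    + apply (gen_mono _ _ Gen). intros y Hy. split; auto. intros ->. auto.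
  - destruct FG as [G HG].
    destruct (reduce_aux UC AC (length G) G (le_n _) HG) as [G' [HG' _]].
    destruct (filter_atoms G') as [l Hl]. exists l. intro x. rewrite <- Hl.
    split; [|tauto]. intro Hx. split; auto.
    destruct (HG' x) as [lx [Hlx E]].
    exact (proj1 (Forall_forall _ _) Hlx x (in_of_atom R _ _ Hx E)).
Qed.
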